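(* Let $(P,A,\lambda)$ be a marked poset. Then all marked chain-order polytopes $\mathcal{CO}_{U_1,U_2}(\lambda)$, for $(U_1,U_2)$ ranging over the admissible decompositions of $(P,A,\lambda)$, are Ehrhart equivalent, i.e. they have the same Ehrhart polynomial; equivalently, for every admissible decomposition $(U_1,U_2)$ and every $n\in\mathbb{N}$, $|S_{U_1,U_2}(n\lambda)|=|S_{P\setminus A,\emptyset}(n\lambda)|$.
   Context: A marked poset is a triple $(P,A,\lambda)$ where $(P,\prec)$ is a finite poset, $A\subseteq P$ contains all minimal and all maximal elements of $P$, and $\lambda:A\to\mathbb{Z}_{\ge 0}$, $a\mapsto\lambda_a$. A decomposition of $(P,A,\lambda)$ is a pair $(U_1,U_2)$ of disjoint sets with $U_1\cup U_2=P\setminus A$; it is admissible if there are no $u_1\in U_1$, $u_2\in U_2$ with $u_1\prec u_2$. Put $A_1=A\cup U_1$. The marked chain-order polytope $\mathcal{CO}_{U_1,U_2}(\lambda)\subset\mathbb{R}^{P\setminus A}$ is the set of $(x_p)_{p\in P\setminus A}$ such that: (i) $x_p\le\lambda_a$ whenever $p\in U_1$, $a\in A$, $p\prec a$; (ii) $\lambda_b\le x_q$ whenever $q\in U_1$, $b\in A$, $b\prec q$; (iii) $x_p\le x_q$ whenever $p,q\in U_1$, $p\prec q$; (iv) $x_p\ge0$ for $p\in U_2$; (v) for every chain $b\prec p_n\prec\cdots\prec p_1\prec a$ with $n\ge1$, $a,b\in A_1$, $p_i\in U_2$: $x_{p_1}+\cdots+x_{p_n}\le\lambda_a-\lambda_b$,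 where $\lambda_q$ means $x_q$ for $q\in U_1$; (vi) for every chain $p_1\prec\cdots\prec p_s\prec q$ with $q\in U_1$, $p_i\in U_2$: $x_{p_1}+\cdots+x_{p_s}\le x_q$. Set $S_{U_1,U_2}(\lambda)=\mathcal{CO}_{U_1,U_2}(\lambda)\cap\mathbb{Z}_{\ge0}^{P\setminus A}$. These polytopes are lattice polytopes. $\mathcal{CO}_{P\setminus A,\emptyset}(\lambda)$ is the marked order polytope. *)

(* Defs.v *)
From HB Require Import structures.
From mathcomp Require Import all_boot all_order.
From mathcomp Require Import boolp classical_sets cardinality.
Set Implicit Arguments. Unset Strict Implicit. Unset Printing Implicit Defensive.
Import Order.TTheory.
Local Open Scope order_scope.

Section MarkedPoset.
Context {d : Order.disp_t} {P : finPOrderType d}.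

Definition is_minimal (p : P) := forall q : P, ~ (q < p).
Definition is_maximal (p : P) := forall q : P, ~ (p < q).

(* (P, A, lambda) is a marked poset: A contains all minimal and maximal
   elements.  lambda : P -> nat, only its values on A are used. *)
Definition marked (A : {set P}) :=
  (forall p, is_minimal p -> p \in A) /\ (forall p, is_maximal p -> p \in A).

Definition decomposition (A U1 U2 : {set P}) :=
  [disjoint U1 & U2] /\ U1 :|: U2 = ~: A.

Definition admissible (A U1 U2 : {set P}) :=
  decomposition A U1 U2 /\
  ~ (exists u1 u2, [/\ u1 \in U1, u2 \in U2 & u1 < u2]).

Definition coordP (A : {set P}) := {p : P | p \notin A}.

(* Value of a point x at an element of P: x_p for p \notin A,
   lambda_p for p \in A (this realises the convention
   "lambda_q means x_q for q in U1" in condition (v)). *)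
Definition xval (A : {set P}) (lam : P -> nat)
  (x : {ffun coordP A -> nat}) (p : P) : nat :=
  match @insub P (fun q => q \notin A) (coordP A) p with
  | Some q => x q
  | None => lam p
  end.

(* Lattice points S_{U1,U2}(lam) of the marked chain-order polytope:
   points of CO_{U1,U2}(lam) with nonnegative integer coordinates
   (condition (iv) x_p >= 0 is automatic for nat-valued points).
   Condition (v) x_{p1}+...+x_{pn} <= lam_a - lam_b is written
   sum + lam_b <= lam_a (equivalent over the integers). *)
Definition in_CO (A U1 U2 : {set P}) (lam : P -> nat)
  (x : {ffun coordP A -> nat}) : Prop :=
  let v := xval lam x in
  (forall p a, p \in U1 -> a \in A -> p < a -> (v p <= lam a)%N) /\
  (forall q b, q \in U1 -> b \in A -> b < q -> (lam b <= v q)%N) /\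
  (forall p q, p \in U1 -> q \in U1 -> p < q -> (v p <= v q)%N) /\
  (* (v) chains b < p_n < ... < p_1 < a, n >= 1, a, b in A1 = A u U1,
     p_i in U2; s = [:: p_n; ...; p_1] *)
  (forall (a b : P) (s : seq P), s != [::] ->
      a \in A :|: U1 -> b \in A :|: U1 ->
      all (fun p => p \in U2) s -> sorted (fun p q => p < q) s ->
      b < head b s -> last a s < a ->
      (\sum_(p <- s) v p + v b <= v a)%N) /\
  (forall (q : P) (s : seq P), q \in U1 ->
      all (fun p => p \in U2) s -> sorted (fun p q => p < q) s ->
      last q s < q \/ s = [::] ->
      (\sum_(p <- s) v p <= v q)%N).


End MarkedPoset.

Arguments in_CO {d P} A U1 U2 lam x.

Definition S_CO {d : Order.disp_t} {P : finPOrderType d}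
  (A U1 U2 : {set P}) (lam : P -> nat) : set {ffun coordP A -> nat} :=
  [set x | in_CO A U1 U2 lam x].
Arguments S_CO {d P} A U1 U2 lam _.

(* Main.v *)
From HB Require Import structures.
Require Import Defs.
From mathcomp Require Import all_boot all_order.
From mathcomp Require Import boolp classical_sets cardinality functions.
From mathcomp Require Import zify.
Import Order.TTheory.
Set Implicit Arguments. Unset Strict Implicit. Unset Printing Implicit Defensive.

HB.instance Definition _ d (P : finPOrderType d) (A : {set P}) :=
  isPointed.Build {ffun coordP A -> nat} [ffun=> 0%N].

Section Proof.
Variables (d : Order.disp_t) (P : finPOrderType d) (A U1 U2 : {set P}) (L : P -> nat).
Hypothesis hA : marked A.
Hypothesis hU : admissible A U1 U2.

Definition M (h : P -> nat) (p : P) : nat := \max_(r | (r < p)%O) h r.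
Definition depth (p : P) := #|[set r : P | (r < p)%O]|.

Fixpoint fit (g : P -> nat) (k : nat) (p : P) {struct k} : nat :=
  if k is k'.+1 then (if p \in U2 then g p + M (fit g k') p else g p) else g p.
Definition W g := fit g #|P|.
Definition isrec (g h : P -> nat) := forall p, h p = if p \in U2 then g p + M h p else g p.

Lemma xvalA (x : {ffun coordP A -> nat}) p : p \in A -> xval L x p = L p.
Proof. by move=> pA; rewrite /xval insubN // negbK. Qed.

Lemma xval_val (x : {ffun coordP A -> nat}) (q : coordP A) : xval L x (val q) = x q.
Proof. by rewrite /xval valK. Qed.

Lemma U1nA p : p \in U1 -> p \notin A.
Proof.
case: hU => [[_ E] _] H; have: p \in ~: A by rewrite -E finset.in_setU H.
by rewrite finset.in_setC.
Qed.
Lemma U2nA p : p \in U2 -> p \notin A.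
Proof.
case: hU => [[_ E] _] H; have: p \in ~: A by rewrite -E finset.in_setU H orbT.
by rewrite finset.in_setC.
Qed.
Lemma nA p : p \notin A -> (p \in U1) || (p \in U2).
Proof. by case: hU => [[_ E] _] H; rewrite -finset.in_setU E finset.in_setC. Qed.
Lemma U21 p : p \in U2 -> (p \in U1) = false.
Proof. by case: hU => [[D _] _] H; apply: disjointFl D H. Qed.
Lemma adm p q : p \in U1 -> q \in U2 -> ~ (p < q)%O.
Proof. by case: hU => _ H pU qU pq; apply: H; exists p, q. Qed.

Lemma depth_lt q p : (q < p)%O -> depth q < depth p.
Proof.
move=> qp; apply: proper_card; apply/properP; split.
  by apply/fintype.subsetP => r; rewrite !inE => rq; apply: lt_trans rq qp.
by exists q; rewrite !inE ?ltxx.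
Qed.

Lemma depth_max p : depth p < #|P|.
Proof.
rewrite -cardsT; apply: proper_card; apply/properP; split; first exact: finset.subsetT.
by exists p; rewrite !inE ?ltxx.
Qed.

Lemma rec_uniq g h1 h2 : isrec g h1 -> isrec g h2 -> h1 =1 h2.
Proof.
move=> H1 H2.
suff K : forall k p, depth p < k -> h1 p = h2 p by move=> p; apply: (K (depth p).+1).
elim=> // k IH p Hp; rewrite H1 H2; case: ifP => // _; congr (_ + _).
by apply: eq_bigr => r Hr; apply: IH; have := depth_lt Hr; lia.
Qed.

Lemma fit_stab g k p : depth p < k -> fit g k p = fit g k.+1 p.
Proof.
elim: k p => // k IH p Hp /=; case: ifP => // _; congr (_ + _).
by apply: eq_bigr => r Hr; apply: IH; have := depth_lt Hr; lia.
Qed.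

Lemma W_rec g : isrec g (W g).
Proof. by move=> p; rewrite /W (fit_stab g (depth_max p)). Qed.

Lemma M_ge h p q : (q < p)%O -> h q <= M h p.
Proof. by move=> qp; rewrite /M; apply: (@leq_bigmax_cond P (fun r => (r < p)%O) h q). Qed.

Lemma M_attained h p : p \notin A -> exists2 q, (q < p)%O & M h p = h q.
Proof.
move=> pA; case: (pickP (fun q => (q < p)%O)) => [q Hq | H]; last first.
  by case: hA => /(_ p) H1 _; rewrite H1 in pA => // q; rewrite H.
have [i0 Hi0 E] := @eq_bigmax_cond P [pred r | (r < p)%O] h (ltac:(by apply/card_gt0P; exists q)).
by exists i0.
Qed.


Definition FF := {ffun coordP A -> nat}.
Definition inO (x : FF) := in_CO A (~: A) finset.set0 L x.
Definition inC (x : FF) := in_CO A U1 U2 L x.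

Definition Phi (x : FF) : FF :=
  [ffun q => let p := val q in let v := xval L x in
     if p \in U2 then v p - M v p else v p].
Definition Psi (y : FF) : FF := [ffun q => W (xval L y) (val q)].

Lemma xvalN (x : FF) p (hp : p \notin A) : xval L x p = x (exist _ p hp).
Proof. exact: (xval_val x (exist _ p hp)). Qed.

Lemma O_mono x : inO x -> forall q p, (q < p)%O -> (q \notin A) || (p \notin A) ->
  xval L x q <= xval L x p.
Proof.
case=> [Hi [Hii [Hiii _]]] q p Hqp.
case qA: (q \in A); case pA: (p \in A) => //= _.
- by rewrite (xvalA x qA); apply: Hii => //; rewrite finset.in_setC pA.
- by rewrite (xvalA x pA); apply: Hi => //; rewrite finset.in_setC qA.
- by apply: Hiii => //; rewrite finset.in_setC ?qA ?pA.
Qed.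

Lemma Phi_val x p : p \notin A -> xval L (Phi x) p =
  (if p \in U2 then xval L x p - M (xval L x) p else xval L x p).
Proof. by move=> hp; rewrite (xvalN _ hp) ffunE. Qed.

Lemma Phi_nonU2 x p : p \notin U2 -> xval L (Phi x) p = xval L x p.
Proof.
move=> pU; case: (boolP (p \in A)) => pA; first by rewrite !xvalA.
by rewrite Phi_val // (negbTE pU).
Qed.

Lemma M_le x p : inO x -> p \notin A -> M (xval L x) p <= xval L x p.
Proof.
move=> Ox pA; apply/bigmax_leqP => r Hr; apply: O_mono => //.
by rewrite pA orbT.
Qed.

Lemma chain1 x : inO x -> forall s b, all (fun p => p \in U2) s ->
  path (fun p q => (p < q)%O) b s ->
  \sum_(p <- s) xval L (Phi x) p + xval L x b <= xval L x (last b s).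
Proof.
move=> Ox; elim=> [|p s IH] b /=; first by rewrite big_nil.
move=> /andP[pU sU] /andP[bp ps]; rewrite big_cons.
have pA := U2nA pU.
rewrite Phi_val // pU.
have h1 := M_ge (xval L x) bp.
have h2 := M_le Ox pA.
have h3 : xval L x p - M (xval L x) p + xval L x b <= xval L x p by lia.
rewrite -addnA (addnC _ (xval L x b)) addnA.
apply: leq_trans (leq_add h3 (leqnn _)) _; rewrite addnC; exact: IH.
Qed.

Lemma last_in (b : P) s : s != [::] -> all (fun p => p \in U2) s -> last b s \in U2.
Proof.
case: s => // p s _ /allP H; apply: H => /=; exact: mem_last.
Qed.

Lemma A1nU2 b : b \in A :|: U1 -> b \notin U2.
Proof.
rewrite finset.in_setU => /orP[bA|bU]; last by apply/negP => /U21; rewrite bU.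
by apply/negP => /U2nA; rewrite bA.
Qed.

Lemma Phi_in x : inO x -> inC (Phi x).
Proof.
move=> Ox; have Ox' := Ox; case: Ox' => [Hi [Hii [Hiii _]]].
split; [|split; [|split; [|split]]].
- move=> p a pU aA pa; rewrite Phi_nonU2; last by apply/negP => /U21; rewrite pU.
  by apply: Hi => //; rewrite finset.in_setC U1nA.
- move=> q b qU bA bq; rewrite Phi_nonU2; last by apply/negP => /U21; rewrite qU.
  by apply: Hii => //; rewrite finset.in_setC U1nA.
- move=> p q pU qU pq; rewrite !Phi_nonU2; try by apply/negP => /U21; rewrite ?pU ?qU.
  by apply: Hiii => //; rewrite finset.in_setC U1nA.
- move=> a b [//|p s] _ aA bA sU ss bh la.
  rewrite !Phi_nonU2 ?A1nU2 //.
  have P1 : path (fun p q => (p < q)%O) b (p :: s) by rewrite /= bh.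
  have := chain1 Ox sU P1.
  have lU : last p s \in U2 := last_in b (s := p :: s) isT sU.
  have := O_mono Ox la; rewrite (U2nA lU) => /(_ isT) /=; lia.
- move=> q s qU sU ss [lq|->]; last by rewrite big_nil.
  case: s sU ss lq => [|p s] sU; first by rewrite big_nil.
  move=> /= ps lq; rewrite big_cons (@Phi_nonU2 _ q); last by apply/negP => /U21; rewrite qU.
  have lU : last p s \in U2 := last_in p (s := p :: s) isT sU.
  move: sU => /= /andP[pU sU].
  have H1 := chain1 Ox sU ps.
  have pA := U2nA pU.
  rewrite Phi_val // pU.
  have H2 := O_mono Ox lq; rewrite (U2nA lU) in H2.
  apply: leq_trans (H2 isT); apply: leq_trans H1.
  rewrite [X in X <= _]addnC leq_add2l; exact: leq_subr.
Qed.

Lemma W_nonU2 g p : p \notin U2 -> W g p = g p.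
Proof. by move=> pU; rewrite W_rec (negbTE pU). Qed.
Lemma W_U2 g p : p \in U2 -> W g p = g p + M (W g) p.
Proof. by move=> pU; rewrite {1}W_rec pU. Qed.

Lemma chain2 g p : p \in U2 -> exists b, exists s,
  [/\ b \notin U2, path (fun p q => (p < q)%O) b s, all (fun r => r \in U2) s,
      last b s = p & W g p = \sum_(r <- s) g r + g b].
Proof.
suff K : forall k p, depth p < k -> p \in U2 -> exists b, exists s,
  [/\ b \notin U2, path (fun p q => (p < q)%O) b s, all (fun r => r \in U2) s,
      last b s = p & W g p = \sum_(r <- s) g r + g b].
  by move=> pU; apply: (K (depth p).+1).
clear p; elim=> // k IH p Hp pU.
have [q qp Mq] := M_attained (W g) (U2nA pU).
have Ew : W g p = g p + W g q by rewrite W_U2 // Mq.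
case qU: (q \in U2).
- have [b [s [bU ps sU ls E]]] := IH q (ltac:(have := depth_lt qp; lia)) qU.
  exists b, (rcons s p); split => //.
  + by rewrite rcons_path ps ls.
  + by rewrite all_rcons pU.
  + by rewrite last_rcons.
  + rewrite Ew E -cats1 big_cat big_seq1 /=; lia.
- exists q, [:: p]; split => //=; first by rewrite qU.
  + by rewrite qp.
  + by rewrite pU.
  + by rewrite Ew big_cons big_nil W_nonU2 ?qU //; lia.
Qed.

Lemma xval_Psi y p : xval L (Psi y) p = W (xval L y) p.
Proof.
case: (boolP (p \in A)) => pA.
  have pU : p \notin U2 by apply/negP => /U2nA; rewrite pA.
  by rewrite W_nonU2 // !xvalA.
by rewrite (xvalN _ pA) ffunE.
Qed.

Lemma Psi_in y : inC y -> inO (Psi y).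
Proof.
move=> Cy; have Cy' := Cy; case: Cy' => [Ci [Cii [Ciii [Cv _]]]].
set g := xval L y.
have nU1 r : r \in U1 -> r \notin U2 by move=> H; apply/negP => /U21; rewrite H.
have Asub r : r \notin U2 -> r \in A :|: U1.
  move=> H; rewrite finset.in_setU; case: (boolP (r \in A)) => //= rA.
  by have := nA rA; rewrite (negbTE H) orbF.
have key : forall p a, p \in U2 -> a \in A :|: U1 -> (p < a)%O -> W g p <= g a.
  move=> p a pU aA pa; have [b [s [bU ps sU ls E]]] := chain2 g pU; rewrite E.
  case: s ps sU ls E => [/= _ _ bp|r s ps sU ls _]; first by rewrite bp pU in bU.
  move: ps => /= /andP[br rs].
  apply: Cv => //; first exact: Asub.
  by move: ls => /= ->.
split; [|split; [|split; [|split]]].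
- move=> p a pA aA pa; rewrite xval_Psi; rewrite finset.in_setC in pA.
  case/orP: (nA pA) => pU; first by rewrite W_nonU2 ?nU1 //; exact: Ci.
  by rewrite -(xvalA y aA); apply: key => //; rewrite finset.in_setU aA.
- move=> q b qA bA bq; rewrite xval_Psi; rewrite finset.in_setC in qA.
  case/orP: (nA qA) => qU; first by rewrite W_nonU2 ?nU1 //; exact: Cii.
  rewrite W_U2 //; apply: leq_trans (leq_addl _ _); apply: leq_trans (M_ge _ bq).
  by rewrite W_nonU2 /g ?xvalA //; apply/negP => /U2nA; rewrite bA.
- move=> p q pA qA pq; rewrite !xval_Psi; rewrite finset.in_setC in pA; rewrite finset.in_setC in qA.
  case/orP: (nA qA) => qU.
    case/orP: (nA pA) => pU; first by rewrite !W_nonU2 ?nU1 //; exact: Ciii.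
    by rewrite (W_nonU2 _ (nU1 _ qU)); apply: key => //; rewrite finset.in_setU qU orbT.
  by rewrite (W_U2 _ qU); apply: leq_trans (leq_addl _ _); exact: M_ge.
- by move=> a b [//|r s] _ _ _ /andP[]; rewrite finset.in_set0.
- by move=> q [|r s] _ /=; [rewrite big_nil | rewrite finset.in_set0].
Qed.

Lemma PsiPhi x : inO x -> Psi (Phi x) = x.
Proof.
move=> Ox; apply/ffunP => q; rewrite ffunE.
have R : isrec (xval L (Phi x)) (xval L x).
  move=> p; case: ifP => pU; last by rewrite Phi_nonU2 ?pU.
  by rewrite Phi_val ?U2nA // pU subnK //; exact: M_le Ox (U2nA pU).
by rewrite (rec_uniq (W_rec _) R) xval_val.
Qed.

Lemma PhiPsi y : Phi (Psi y) = y.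
Proof.
apply/ffunP => q; rewrite ffunE /=.
have E : M (xval L (Psi y)) (val q) = M (W (xval L y)) (val q).
  by apply: eq_bigr => r _; exact: xval_Psi.
rewrite E !xval_Psi; case: ifP => qU.
  by rewrite W_U2 // addnK xval_val.
by rewrite W_nonU2 ?qU // xval_val.
Qed.

Lemma main_gen : (S_CO A U1 U2 L #= S_CO A (~: A) finset.set0 L)%card.
Proof.
apply/card_set_bijP; exists Psi; split.
- by move=> y Cy; exact: Psi_in.
- by move=> y1 y2 _ _ E; rewrite -(PhiPsi y1) -(PhiPsi y2) E.
- move=> x Ox; exists (Phi x); [exact: Phi_in | exact: PsiPhi].
Qed.

End Proof.

Local Open Scope classical_set_scope.
Local Open Scope card_scope.

Theorem theorem3p1 (d : Order.disp_t) (P : finPOrderType d)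
  (A : {set P}) (lam : P -> nat) (hA : marked A)
  (U1 U2 : {set P}) (hU : admissible A U1 U2) (n : nat) :
  S_CO A U1 U2 (fun a => n * lam a)%N #= S_CO A (~: A) (finset.set0 : {set P}) (fun a => n * lam a)%N.
Proof.
exact: (main_gen (fun a => n * lam a)%N hA hU).
Qed.
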